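(* Let $T>0$, $I=[0,T]$, $\nu_1,\nu_2\in\mathbb{R}$, $p>1$. Let $\Phi:\mathbb{R}\to\mathbb{R}$ be a strictly increasing homeomorphism; let $A:W^{1,p}(I)\to C(I,\mathbb{R})$, $x\mapsto A_x$, be continuous w.r.t. the uniform topology, with $h_1,h_2\in C(I,\mathbb{R})$, $h_1,h_2\ge0$, $1/h_1,1/h_2\in L^p(I)$ and $h_1(t)\le A_x(t)\le h_2(t)$ for all $x\in W^{1,p}(I)$, $t\in I$; let $F:W^{1,p}(I)\to L^1(I)$, $x\mapsto F_x$, be continuous with $|F_x(t)|\le\psi(t)$ for all $x$ and a.e. $t$, for some non-negative $\psi\in L^1(I)$. Set $\mathcal{F}_x(t):=\int_0^tF_x(s)\,ds$. Then for every $x\in W^{1,p}(I)$ there exists a unique $\xi_x\in\mathbb{R}$ such that $\int_0^T\frac{1}{A_x(t)}\Phi^{-1}(\xi_x+\mathcal{F}_x(t))\,dt=\nu_2-\nu_1$, and there exists a constant $\mathbf{c}_0>0$ such that $|\xi_x|\le\mathbf{c}_0$ for every $x\in W^{1,p}(I)$.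
   Context: $W^{1,p}(I)$ is regarded as a subspace of $C(I,\mathbb{R})$; continuity of $A$ refers to the sup norm on both sides. *)

(* Defs.v *)
From HB Require Import structures.
From mathcomp Require Import all_boot all_order all_algebra.
From mathcomp Require Import all_classical all_reals all_analysis.
Set Implicit Arguments. Unset Strict Implicit. Unset Printing Implicit Defensive.
Import Order.TTheory GRing.Theory Num.Theory.
Import numFieldNormedType.Exports.
Local Open Scope classical_set_scope.
Local Open Scope ring_scope.

Notation leb R := (@lebesgue_measure R).

Definition Icc {R : realType} (T : R) : set R := `[0, T]%classic.

Definition in_Lp {R : realType} (T p : R) (g : R -> R) : Prop :=
  measurable_fun (Icc T) g /\
  (\int[leb R]_(t in (Icc T)) ((`|g t| `^ p)%R%:E) < +oo)%E.

Definition in_L1 {R : realType} (T : R) (g : R -> R) : Prop :=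
  (leb R).-integrable (Icc T) (fun t => (g t)%:E).

(* x ∈ W^{1,p}(I), seen as a continuous function on I: x is the primitive
   of some L^p function g, i.e. x t = x 0 + \int_0^t g for t in I. *)
Definition W1p {R : realType} (T p : R) (x : R -> R) : Prop :=
  exists g : R -> R, in_Lp T p g /\
    forall t, 0 <= t <= T -> x t = x 0 + Rintegral (leb R) (Icc t) g.

Definition sup_close {R : realType} (T : R) (f g : R -> R) (d : R) : Prop :=
  forall t, 0 <= t <= T -> `|f t - g t| <= d.

Definition primF {R : realType} (Fx : R -> R) (t : R) : R :=
  Rintegral (leb R) (Icc t) Fx.

(* Main.v *)
Require Import Defs.
From HB Require Import structures.
From mathcomp Require Import all_boot all_order all_algebra.
From mathcomp Require Import all_classical all_reals all_analysis.
From mathcomp Require Import measurable_realfun lebesgue_integral_under ftc.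
Import Order.TTheory GRing.Theory Num.Theory.
Import numFieldNormedType.Exports.
Set Implicit Arguments. Unset Strict Implicit. Unset Printing Implicit Defensive.
Local Open Scope classical_set_scope.
Local Open Scope ring_scope.

Section helpers.
Context {R : realType}.

Lemma meas_inv : measurable_fun setT (@GRing.inv R).
Proof.
have -> : [set: R] = [set x : R | x != 0] `|` [set 0].
  by apply/seteqP; split => x //= _; have [->|] := eqVneq x 0; [right|left].
apply/measurable_funU; [exact: open_measurable; exact: open_neq|by []|split; last exact: measurable_fun_set1].
apply: open_continuous_measurable_fun; first exact: open_neq.
move=> x /set_mem /= x0; exact: inv_continuous.
Qed.

Lemma mIcc (T : R) : measurable (Icc T).
Proof. exact: measurable_itv. Qed.

Lemma cont_meas (T : R) (h : R -> R) : {within Icc T, continuous h} ->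
  measurable_fun (Icc T) h.
Proof. move=> hc; exact: subspace_continuous_measurable_fun (mIcc T) hc. Qed.

Lemma leb_Icc (T : R) : 0 <= T -> (leb R : {measure set (measurableTypeR R) -> \bar R}) (Icc T) = T%:E.
Proof.
move=> T0; apply: etrans; first exact: (lebesgue_measure_itv `[0, T]%R).
rewrite /=.
case: ifPn => [_|]; first by rewrite sube0.
by rewrite -leNgt => T0'; apply/eqP; rewrite eq_le T0' lee_fin T0.
Qed.

Lemma integrable_cst_Icc (T k : R) : 0 <= T ->
  (leb R).-integrable (Icc T) (fun _ => k%:E).
Proof.
move=> T0; apply/integrableP; split; first exact: measurable_cst.
rewrite integral_cst; last exact: mIcc.
by rewrite leb_Icc // -EFinM ltry.
Qed.
End helpers.

From mathcomp Require Import ring lra.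

Section fixed.
Context {R : realType}.
Variables (T M c : R) (a P Phi Phiinv : R -> R) (Z : set R).
Hypotheses (T0 : 0 < T) (c0 : 0 < c) (mZ : measurable (Z : set (measurableTypeR R))) (Z0 : leb R Z = 0%E)
 (ma : measurable_fun (Icc T) a) (mP : measurable_fun (Icc T) P)
 (aint : (leb R).-integrable (Icc T) (EFin \o a))
 (a0 : forall t, Icc T t -> 0 <= a t)
 (alb : forall t, Icc T t -> ~ Z t -> c <= a t)
 (Pb : forall t, Icc T t -> `|P t| <= M)
 (Pcont : continuous Phiinv) (Pinc : forall u v, u < v -> Phiinv u < Phiinv v)
 (PhiK : cancel Phi Phiinv).

Local Notation I := (Icc T).
Local Notation G xi := (Rintegral (leb R) (Icc T) (fun t => a t * Phiinv (xi + P t))).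

Let mI : measurable (I : set (measurableTypeR R)) := mIcc T.

Lemma Pinc_le u v : u <= v -> Phiinv u <= Phiinv v.
Proof. by rewrite le_eqVlt => /predU1P[->//|/Pinc/ltW]. Qed.

Lemma M0 : 0 <= M.
Proof. apply: le_trans (Pb (t:=0) _) => //; rewrite /Icc /= in_itv /= lexx ltW //. Qed.

Lemma PI t : I t -> - M <= P t <= M.
Proof. by move=> /Pb; rewrite ler_norml. Qed.

Lemma mint xi : measurable_fun I (fun t => a t * Phiinv (xi + P t)).
Proof.
apply: measurable_funM => //; apply: measurableT_comp.
  exact: continuous_measurable_fun.
by apply: measurable_funD => //; exact: measurable_cst.
Qed.

Definition K u v := Num.max `|Phiinv (u - M)| `|Phiinv (v + M)|.

Lemma Kbnd u v xi t : u <= xi <= v -> I t -> `|Phiinv (xi + P t)| <= K u v.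
Proof.
move=> /andP[uxi xiv] /PI /andP[PM1 PM2].
have h1 : Phiinv (u - M) <= Phiinv (xi + P t) by apply: Pinc_le; lra.
have h2 : Phiinv (xi + P t) <= Phiinv (v + M) by apply: Pinc_le; lra.
rewrite /K le_max; apply/orP.
have [/ger0_norm ->|/ltr0_norm ->] := leP 0 (Phiinv (xi + P t)).
  by right; rewrite (le_trans h2 (ler_norm _)).
by left; rewrite -normrN (le_trans _ (ler_norm _)) // lerN2.
Qed.

Lemma integ_bnd u v xi : u <= xi <= v ->
  (leb R).-integrable I (EFin \o (fun t => a t * Phiinv (xi + P t))).
Proof.
move=> uxv.
have := integrableZl mI (K u v) aint; apply: le_integrable => //.
  apply/measurable_EFinP; exact: mint.
move=> t It /=; rewrite lee_fin.
have K0 : 0 <= K u v by rewrite /K le_max normr_ge0.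
rewrite !normrM (ger0_norm (a0 It)) (ger0_norm K0).
by rewrite mulrC ler_wpM2r ?a0 // Kbnd.
Qed.

Lemma integ xi : (leb R).-integrable I (EFin \o (fun t => a t * Phiinv (xi + P t))).
Proof. by apply: (@integ_bnd xi xi); rewrite lexx. Qed.

Lemma Rint_J f : (leb R).-integrable I (EFin \o f) ->
  Rintegral (leb R) I f = Rintegral (leb R) (I `\` Z) f.
Proof. by move=> fi; rewrite /Rintegral (negligible_integral mZ mI fi Z0). Qed.

Lemma ae_le f g : (leb R).-integrable I (EFin \o f) -> (leb R).-integrable I (EFin \o g) ->
  (forall t, I t -> ~ Z t -> f t <= g t) ->
  Rintegral (leb R) I f <= Rintegral (leb R) I g.
Proof.
move=> fi gi fg; rewrite (Rint_J fi) (Rint_J gi).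
have mJ : measurable (I `\` Z) by exact: measurableD.
apply: le_Rintegral => //.
- by apply: integrableS fi => //; exact: subDsetl.
- by apply: integrableS gi => //; exact: subDsetl.
by move=> t [It Zt]; exact: fg.
Qed.

Lemma Rint_cst k : Rintegral (leb R) I (fun _ => k) = k * T.
Proof. by rewrite Rintegral_cst // leb_Icc ?ltW. Qed.

Lemma cst_int k : (leb R).-integrable I (EFin \o (fun _ => k)).
Proof. exact: integrable_cst_Icc (ltW T0). Qed.

Lemma G_lb xi : 0 <= Phiinv (xi - M) -> c * Phiinv (xi - M) * T <= G xi.
Proof.
move=> h; rewrite -Rint_cst; apply: ae_le; [exact: cst_int|exact: integ|].
move=> t It Zt; have := alb It Zt; have /andP[h1 h2] := PI It.
have : Phiinv (xi - M) <= Phiinv (xi + P t) by apply: Pinc_le; lra.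
move=> H1 H2; apply: le_trans (ler_wpM2r h H2) _.
by apply: ler_wpM2l; [exact: a0|].
Qed.

Lemma G_ub xi : Phiinv (xi + M) <= 0 -> G xi <= c * Phiinv (xi + M) * T.
Proof.
move=> h; rewrite -Rint_cst; apply: ae_le; [exact: integ|exact: cst_int|].
move=> t It Zt; have := alb It Zt; have /andP[h1 h2] := PI It.
have : Phiinv (xi + P t) <= Phiinv (xi + M) by apply: Pinc_le; lra.
move=> H1 H2; apply: le_trans (ler_wpM2l (a0 It) H1) _.
by apply: ler_wnM2r.
Qed.

Lemma G_strict xi xi' : xi < xi' -> G xi < G xi'.
Proof.
move=> lt.
have MM : - M <= M by have := M0; lra.
have cf : {within `[- M, M], continuous (fun u => Phiinv (xi' + u) - Phiinv (xi + u))}.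
  apply: continuous_subspaceT => y.
  by apply: continuousB; apply: continuous_comp; (try apply: cvgD); (try exact: cvg_cst); (try exact: cvg_id); exact: Pcont.
have [u uM umin] := EVT_min MM cf.
set d := Phiinv (xi' + u) - Phiinv (xi + u) in umin.
have d0 : 0 < d by rewrite /d subr_gt0; apply: Pinc; lra.
have : G xi + c * d * T <= G xi'.
  rewrite -Rint_cst -RintegralD //; [|exact: integ|exact: cst_int].
  apply: ae_le; [|exact: integ|].
    apply: (eq_integrable mI ((EFin \o (fun t => a t * Phiinv (xi + P t))) \+ (EFin \o (fun _ => c * d)))).
      by move=> t _ /=; rewrite EFinD.
    exact: (integrableD mI (integ xi) (cst_int _)).
  move=> t It Zt; have := alb It Zt; have /andP[h1 h2] := PI It.
  have : d <= Phiinv (xi' + P t) - Phiinv (xi + P t) by apply: umin; rewrite in_itv /=; lra.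
  move=> H1 H2; have := a0 It => H3.
  have H4 : a t * d <= a t * (Phiinv (xi' + P t) - Phiinv (xi + P t)) by apply: ler_wpM2l.
  have H5 : c * d <= a t * d by apply: ler_wpM2r => //; exact: ltW.
  lra.
have : 0 < c * d * T by rewrite !mulr_gt0.
lra.
Qed.

Lemma G_cont : continuous (fun xi => G xi).
Proof.
move=> x0.
have Kint : (leb R).-integrable I (EFin \o (fun t => K (x0 - 1) (x0 + 1) * a t)).
  apply: (@eq_integrable _ _ _ (leb R) _ mI (fun t => ((K (x0 - 1) (x0 + 1))%:E * (EFin \o a) t)%E)).
    by move=> t _ /=; rewrite EFinM.
  exact: integrableZl.
have := @continuity_under_integral R _ _ (leb R) (fun xi t => a t * Phiinv (xi + P t)) I mI
  (x0 - 1) (x0 + 1) (fun x _ => integ x) _ _ Kint.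
apply.
- apply: aeW => y _ z _.
  apply: continuousM; first exact: cvg_cst.
  apply: continuous_comp; (try apply: cvgD); (try exact: cvg_cst); (try exact: cvg_id); exact: Pcont.
- move=> z; rewrite /= in_itv /= => /andP[z1 z2]; apply: aeW => t It.
  rewrite normrM (ger0_norm (a0 It)) mulrC ler_wpM2r ?a0 //.
  by apply: Kbnd => //; rewrite !ltW.
- by rewrite inE /= in_itv /=; apply/andP; split; lra.
Qed.

Lemma sol_bnd nu L xi : 0 < L -> `|nu| < c * L * T -> G xi = nu ->
  - M + Phi (- L) <= xi <= M + Phi L.
Proof.
move=> L0 nuL Gxi; apply/andP; split.
  rewrite leNgt; apply/negP => lt.
  have h : Phiinv (xi + M) < - L by rewrite -[X in _ < X]PhiK; apply: Pinc; lra.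
  have hl : - L < 0 by rewrite oppr_lt0.
  have := G_ub (ltW (lt_trans h hl)); rewrite Gxi => h2.
  have h3 : c * Phiinv (xi + M) * T <= c * (- L) * T.
    by rewrite ler_pM2r // ler_pM2l // ltW.
  have := ler_norm (- nu); rewrite normrN; lra.
rewrite leNgt; apply/negP => lt.
have h : L < Phiinv (xi - M) by rewrite -[X in X < _]PhiK; apply: Pinc; lra.
have := G_lb (ltW (lt_trans L0 h)); rewrite Gxi => h2.
have h3 : c * L * T <= c * Phiinv (xi - M) * T.
  by rewrite ler_pM2r // ler_pM2l // ltW.
have := ler_norm nu; lra.
Qed.

Lemma sol_ex nu L : 0 < L -> `|nu| < c * L * T -> exists xi, G xi = nu.
Proof.
move=> L0 nuL.
have M0' := M0.
have hP : Phi (- L) < Phi L.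
  rewrite ltNge; apply/negP => /Pinc_le; rewrite !PhiK; lra.
have ab : - M + Phi (- L) <= M + Phi L by lra.
have lb : c * L * T <= G (M + Phi L).
  have e : Phiinv (M + Phi L - M) = L by rewrite addrC addKr PhiK.
  by rewrite -[X in c * X * T]e; apply: G_lb; rewrite e ltW.
have ub : G (- M + Phi (- L)) <= c * (- L) * T.
  have e : Phiinv (- M + Phi (- L) + M) = - L by rewrite addrAC addNr add0r PhiK.
  by rewrite -[X in c * X * T]e; apply: G_ub; rewrite e oppr_le0 ltW.
have [xi _ Gnu] : exists2 xi, xi \in `[- M + Phi (- L), M + Phi L] & G xi = nu.
  apply: IVT => //; first exact/continuous_subspaceT/G_cont.
  have := ler_norm nu; have := ler_norm (- nu); rewrite normrN => n1 n2.
  rewrite ge_min le_max; apply/andP; split; apply/orP; [left|right]; nra.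
by exists xi; rewrite -Gnu.
Qed.

End fixed.

Section more.
Context {R : realType}.

Lemma ae_le_gen (D N : set (measurableTypeR R)) (f g : R -> R) :
  measurable D -> measurable N -> leb R N = 0%E ->
  (leb R).-integrable D (EFin \o f) -> (leb R).-integrable D (EFin \o g) ->
  (forall t, D t -> ~ N t -> f t <= g t) ->
  Rintegral (leb R) D f <= Rintegral (leb R) D g.
Proof.
move=> mD mN N0 fi gi fg.
rewrite /Rintegral (negligible_integral mN mD fi N0) (negligible_integral mN mD gi N0).
have mJ : measurable (D `\` N) by exact: measurableD.
apply: le_Rintegral => //.
- by apply: integrableS fi => //; exact: subDsetl.
- by apply: integrableS gi => //; exact: subDsetl.
by move=> t [Dt Nt]; exact: fg.
Qed.

Lemma Lp_L1 (T p : R) (g : R -> R) : 0 <= T -> 1 < p -> in_Lp T p g ->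
  (leb R).-integrable (Icc T) (EFin \o g).
Proof.
move=> T0 p1 [mg fin].
have mI : measurable (Icc T : set (measurableTypeR R)) := mIcc T.
have mgp : measurable_fun (Icc T : set (measurableTypeR R)) (fun t => `|g t| `^ p).
  apply: (measurableT_comp (measurable_powR _)).
  exact: (measurableT_comp (@normr_measurable _ _) mg).
have ip : (leb R).-integrable (Icc T) (EFin \o (fun t => `|g t| `^ p)).
  apply/integrableP; split; first exact/measurable_EFinP.
  apply: le_lt_trans fin; apply: ge0_le_integral => //.
  - apply/measurable_EFinP; apply: (measurableT_comp (@normr_measurable _ _)); exact: mgp.
  - by apply/measurable_EFinP.
  by move=> t _ /=; rewrite ger0_norm // powR_ge0.
have i1 := integrableD mI (integrable_cst_Icc 1 T0) ip.
apply: (le_integrable mI _ _ i1).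
  apply/measurable_EFinP; exact: mg.
move=> t _ /=; rewrite lee_fin [X in _ <= X]ger0_norm ?addr_ge0 ?powR_ge0 //.
have [le1|gt1] := leP `|g t| 1.
  by apply: le_trans le1 _; rewrite lerDl powR_ge0.
have h : `|g t| <= `|g t| `^ p.
  apply: le_trans (ler_powR (ltW gt1) (ltW p1)).
  by rewrite powRr1 // normr_ge0.
by apply: le_trans h _; rewrite lerDr.
Qed.

End more.

Theorem lemma2p6 (R : realType) (T nu1 nu2 p : R)
  (Phi Phiinv : R -> R) (A F : (R -> R) -> R -> R) (h1 h2 psi : R -> R) :
  0 < T -> 1 < p ->
  (* Phi : R -> R strictly increasing homeomorphism, Phiinv its inverse *)
  continuous Phi -> (forall a b, a < b -> Phi a < Phi b) ->
  cancel Phi Phiinv -> cancel Phiinv Phi -> continuous Phiinv ->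
  (* A : W^{1,p}(I) -> C(I,R), continuous for the sup norms *)
  (forall x, W1p T p x -> {within (Icc T), continuous (A x)}) ->
  (forall x, W1p T p x -> forall e, 0 < e -> exists2 d, 0 < d &
     forall y, W1p T p y -> sup_close T x y d -> sup_close T (A x) (A y) e) ->
  (* h1, h2 continuous, non-negative, 1/h1, 1/h2 in L^p *)
  {within (Icc T), continuous h1} -> {within (Icc T), continuous h2} ->
  (forall t, 0 <= t <= T -> 0 <= h1 t) -> (forall t, 0 <= t <= T -> 0 <= h2 t) ->
  leb R ((Icc T) `&` [set t | h1 t = 0]) = 0%E ->
  leb R ((Icc T) `&` [set t | h2 t = 0]) = 0%E ->
  in_Lp T p (fun t => (h1 t)^-1) -> in_Lp T p (fun t => (h2 t)^-1) ->
  (forall x, W1p T p x -> forall t, 0 <= t <= T -> h1 t <= A x t <= h2 t) ->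
  (* F : W^{1,p}(I) -> L^1(I), continuous *)
  (forall x, W1p T p x -> in_L1 T (F x)) ->
  (forall x, W1p T p x -> forall e, 0 < e -> exists2 d, 0 < d &
     forall y, W1p T p y -> sup_close T x y d ->
       Rintegral (leb R) (Icc T) (fun t => `|F x t - F y t|) <= e) ->
  (* |F_x| <= psi a.e., psi >= 0 in L^1 *)
  (forall t, 0 <= psi t) -> in_L1 T psi ->
  (forall x, W1p T p x ->
     {ae leb R, forall t, (Icc T) t -> `|F x t| <= psi t}) ->
  (forall x, W1p T p x -> exists! xi : R,
     Rintegral (leb R) (Icc T)
       (fun t => (A x t)^-1 * Phiinv (xi + primF (F x) t)) = nu2 - nu1) /\
  (exists2 c0 : R, 0 < c0 & forall x, W1p T p x -> forall xi : R,
     Rintegral (leb R) (Icc T)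
       (fun t => (A x t)^-1 * Phiinv (xi + primF (F x) t)) = nu2 - nu1 ->
     `|xi| <= c0).
Proof.
move=> T0 p1 Phic Phiinc PhiK PhiinvK Phiinvc Acont Acont2 h1c h2c h10 h20 Z1 Z2
  h1Lp h2Lp hA Fint Fcont psi0 psiint Fpsi.
have mI : measurable (Icc T : set (measurableTypeR R)) := mIcc T.
have IccP : forall t, Icc T t -> 0 <= t <= T.
  by move=> t; rewrite /Icc /= in_itv.
have Pinc : forall u v, u < v -> Phiinv u < Phiinv v.
  move=> u v uv; rewrite ltNge; apply/negP; rewrite le_eqVlt => /predU1P[e|lt].
    by have := congr1 Phi e; rewrite !PhiinvK => e'; move: uv; rewrite e' ltxx.
  by have := Phiinc _ _ lt; rewrite !PhiinvK => vu; move: (lt_trans uv vu); rewrite ltxx.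
have mh1 := cont_meas h1c; have mh2 := cont_meas h2c.
pose Z := (Icc T `&` [set t | h1 t = 0]) `|` (Icc T `&` [set t | h2 t = 0]).
have mZ1 : measurable (Icc T `&` [set t | h1 t = 0] : set (measurableTypeR R)).
  exact: (mh1 (mIcc T) [set 0] (measurable_set1 0)).
have mZ2 : measurable (Icc T `&` [set t | h2 t = 0] : set (measurableTypeR R)).
  exact: (mh2 (mIcc T) [set 0] (measurable_set1 0)).
have mZ : measurable (Z : set (measurableTypeR R)) by exact: measurableU.
have Z0 : leb R Z = 0%E by rewrite /Z measureU0 // Z1.
have [tm tmI tmax] := @EVT_max R h2 0 T (ltW T0) h2c.
pose C := h2 tm + 1.
have C0 : 0 < C by rewrite /C ltr_wpDl // h20 //; move: tmI; rewrite in_itv.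
pose c := C^-1.
have c0 : 0 < c by rewrite /c invr_gt0.
pose M := Rintegral (leb R) (Icc T) psi.
have facts : forall x, W1p T p x ->
  [/\ measurable_fun (Icc T) (fun t => (A x t)^-1),
      measurable_fun (Icc T) (primF (F x)),
      (leb R).-integrable (Icc T) (EFin \o (fun t => (A x t)^-1)),
      (forall t, Icc T t -> 0 <= (A x t)^-1) &
      ((forall t, Icc T t -> ~ Z t -> c <= (A x t)^-1) /\
      (forall t, Icc T t -> `|primF (F x) t| <= M))].
  move=> x Wx.
  have ma : measurable_fun (Icc T) (fun t => (A x t)^-1).
    exact: (measurableT_comp meas_inv (cont_meas (Acont x Wx))).
  have a0 : forall t, Icc T t -> 0 <= (A x t)^-1.
    move=> t It; rewrite invr_ge0; have /andP[h _] := hA x Wx t (IccP t It).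
    exact: le_trans (h10 t (IccP t It)) h.
  have pos : forall t, Icc T t -> ~ Z t -> [/\ 0 < h1 t, 0 < h2 t & 0 < A x t].
    move=> t It Zt.
    have n1 : h1 t != 0 by apply/eqP => e; apply: Zt; left.
    have n2 : h2 t != 0 by apply/eqP => e; apply: Zt; right.
    have p1' : 0 < h1 t by rewrite lt_neqAle eq_sym n1 h10 // IccP.
    have p2' : 0 < h2 t by rewrite lt_neqAle eq_sym n2 h20 // IccP.
    have /andP[h _] := hA x Wx t (IccP t It).
    by split => //; exact: lt_le_trans p1' h.
  split => //.
  - exact: (cont_meas (parameterized_integral_continuous (ltW T0) (Fint x Wx))).
  - apply/(negligible_integrable mZ mI _ Z0).
      by apply/measurable_EFinP; exact: ma.
    have mJ : measurable ((Icc T `\` Z) : set (measurableTypeR R)) by exact: measurableD.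
    have h1i := Lp_L1 (ltW T0) p1 h1Lp.
    apply: (le_integrable mJ _ _ (integrableS mI mJ (@subDsetl _ _ _) h1i)).
      by apply/measurable_EFinP; apply: measurable_funS ma => //; exact: subDsetl.
    move=> t [It Zt] /=; have [q1 _ q3] := pos t It Zt.
    rewrite lee_fin !ger0_norm ?invr_ge0 ?(ltW q1) ?(ltW q3) // lef_pV2 ?posrE //.
    by have /andP[] := hA x Wx t (IccP t It).
  split.
  - move=> t It Zt; have [_ q2 q3] := pos t It Zt.
    rewrite /c lef_pV2 ?posrE //; have /andP[_ h] := hA x Wx t (IccP t It).
    apply: (le_trans h); rewrite /C; apply: ler_wpDr => //.
    by apply: tmax; rewrite in_itv /= IccP.
  - move=> t It; have /andP[t0 tT] := IccP t It.
    have mIt : measurable (Icc t : set (measurableTypeR R)) := mIcc t.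
    have sub : Icc t `<=` Icc T.
      move=> s; rewrite /Icc /= !in_itv /= => /andP[s0 st].
      by rewrite s0 (le_trans st tT).
    have Fi : (leb R).-integrable (Icc t) (EFin \o F x).
      exact: (integrableS mI mIt sub (Fint x Wx)).
    have psii : (leb R).-integrable (Icc t) (EFin \o psi).
      exact: (integrableS mI mIt sub psiint).
    have [N [mN N0 Nsub]] := Fpsi x Wx.
    apply: le_trans (le_normr_Rintegral mIt Fi) _.
    apply: (@le_trans _ _ (Rintegral (leb R) (Icc t) psi)).
      apply: (ae_le_gen mIt mN N0 (integrable_norm Fi) psii).
      move=> s Is Ns; apply: contra_notP Ns => /negP ns; apply: Nsub => /=.
      by move=> /(_ (sub s Is)); apply/negP.
    rewrite /M /Rintegral fine_le //; try exact: integrable_fin_num.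
    apply: ge0_subset_integral => //; first by case/integrableP: psiint.
    by move=> s _; rewrite lee_fin.
pose nu := nu2 - nu1.
pose L := `|nu| / (c * T) + 1.
have L0 : 0 < L by rewrite /L ltr_wpDl // divr_ge0 // ?mulr_ge0 // ltW.
have nuL : `|nu| < c * L * T.
  have e : c * L * T = `|nu| + c * T.
    rewrite /L; field; apply/andP; split; rewrite gt_eqF //.
  by rewrite e ltrDl mulr_gt0.
split.
  move=> x Wx; have [ma mP aint a0 [alb Pb]] := facts x Wx.
  have [xi Hxi] := sol_ex T0 mZ Z0 ma mP aint a0 alb Pb Phiinvc Pinc PhiK L0 nuL.
  exists xi; split => // xi' Hxi'.
  case: (ltgtP xi xi') => // lt.
    by have := G_strict T0 c0 mZ Z0 ma mP aint a0 alb Pb Phiinvc Pinc lt; rewrite Hxi Hxi' ltxx.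
  by have := G_strict T0 c0 mZ Z0 ma mP aint a0 alb Pb Phiinvc Pinc lt; rewrite Hxi Hxi' ltxx.
exists (`|M + Phi L| + `|- M + Phi (- L)| + 1).
  by rewrite ltr_wpDl // addr_ge0.
move=> x Wx xi Hxi; have [ma mP aint a0 [alb Pb]] := facts x Wx.
have /andP[lo hi] := sol_bnd T0 c0 mZ Z0 ma mP aint a0 alb Pb Phiinvc Pinc PhiK L0 nuL Hxi.
have := ler_norm (M + Phi L); have := ler_norm (- (- M + Phi (- L))); rewrite normrN.
have := normr_ge0 (M + Phi L); have := normr_ge0 (- M + Phi (- L)).
rewrite ler_norml; lra.
Qed.
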